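(* In partially synchronous systems, there is no deterministic protocol that solves Byzantine consensus (Validity, Agreement, Termination) in every system whose knowledge connectivity graph belongs to $\mathcal{G}_{di}$ when each process $i$ is given only its participant detector $PD_i$ as input and no process knows the fault threshold $f$. (This holds even with digital signatures, and even when faults are only crashes.)
   Context: System: finite set $\Pi$ of processes, partially synchronous (an unknown GST after which messages between correct processes arrive within an unknown $\delta$), a set $F$ of faulty processes with $|F|\le f$ for some fault threshold $f$, reliable authenticated channels. Each process $i$ has a participant detector $PD_i\subseteq\Pi$ (the processes it initially knows) and may only message processes it currently knows. The knowledge connectivity graph is $G_{di}=(\Pi,\{(i,j):j\in PD_i\})$. A digraph belongs to $k$-OSR PD if its underlying undirected graph is connected, its condensation has exactly one sink component, that sink is $k$-strongly connected, and every vertex outside it has $k$ node-disjoint paths to every vertex in it. $G_{safe}=G_{di}[\Pi\setminus F]$. $\mathcal{G}_{di}$: graphs whose $G_{safe}$ is in $(f+1)$-OSR PD with safe sink of size $\ge 2f+1$. Consensus: each correct process proposes a valid value (w.r.t. a predicate $\mathtt{valid}$); Validity: a correct process decides a valid value proposed by some process; Agreement: all correct processes decide the same value; Termination: every correct process eventually decides. *)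

(* Defs.v *)
From Stdlib Require List.
From mathcomp Require Import all_boot finmap.

Set Implicit Arguments.
Unset Strict Implicit.
Unset Printing Implicit Defensive.

Local Open Scope fset_scope.

(* Process identifiers are drawn from an unbounded universe (nat); a system  *)
(* is a finite set [Pi] of identifiers.                                      *)
Definition pid := nat.

(* A digraph on the vertex set V is given by an edge relation E; only edges *)
(* with both endpoints in V are considered.                                  *)

Definition reach (V : {fset pid}) (E : pid -> pid -> bool) (x y : pid) : Prop :=
  x \in V /\ exists p : seq pid,
    path (fun a b => E a b && (b \in V)) x p /\ last x p = y.

Definition und_connected (V : {fset pid}) (E : pid -> pid -> bool) : Prop :=
  forall x y, x \in V -> y \in V -> reach V (fun a b => E a b || E b a) x y.

Definition sink_component (V : {fset pid}) (E : pid -> pid -> bool)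
    (S : {fset pid}) : Prop :=
  [/\ S `<=` V, S != fset0,
      (forall x y, x \in S -> y \in S -> reach V E x y) &
      (forall x y, x \in S -> y \in V -> E x y -> y \in S)].

(* There are k node-disjoint paths from x to y in (V,E).  A path is given by *)
(* its sequence of internal vertices; paths are pairwise distinct and their  *)
(* internal vertices are pairwise disjoint and avoid the endpoints.          *)
Definition disjoint_paths (V : {fset pid}) (E : pid -> pid -> bool)
    (x y : pid) (k : nat) : Prop :=
  exists ps : seq (seq pid),
    [/\ size ps = k, uniq ps,
        (forall p, p \in ps ->
           [/\ path E x (rcons p y), all (fun v => v \in V) p,
               x \notin p & y \notin p]) &
        (forall p q v, p \in ps -> q \in ps -> p != q -> v \in p -> v \notin q)].

Definition k_strongly_connected (V : {fset pid}) (E : pid -> pid -> bool)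
    (k : nat) : Prop :=
  forall x y, x \in V -> y \in V -> x != y -> disjoint_paths V E x y k.

Definition induced (V : {fset pid}) (E : pid -> pid -> bool) :=
  fun a b => [&& E a b, a \in V & b \in V].

Definition k_OSR_with_sink (V : {fset pid}) (E : pid -> pid -> bool)
    (k : nat) (S : {fset pid}) : Prop :=
  [/\ und_connected V E,
      sink_component V E S,
      (forall S', sink_component V E S' -> S' = S),
      k_strongly_connected S (induced S E) k &
      (forall x y, x \in V -> x \notin S -> y \in S -> disjoint_paths V E x y k)].

Definition k_OSR (V : {fset pid}) (E : pid -> pid -> bool) (k : nat) : Prop :=
  exists S, k_OSR_with_sink V E k S.

Definition Gdi_edge (PD : pid -> {fset pid}) : pid -> pid -> bool :=
  fun i j => j \in PD i.

Definition system_ok (Pi : {fset pid}) (PD : pid -> {fset pid})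
    (f : nat) (F : {fset pid}) : Prop :=
  [/\ forall i, i \in Pi -> PD i `<=` Pi, F `<=` Pi & (#|` F| <= f)%N].

Definition in_Gdi (Pi : {fset pid}) (PD : pid -> {fset pid})
    (f : nat) (F : {fset pid}) : Prop :=
  exists S, k_OSR_with_sink (Pi `\` F) (Gdi_edge PD) f.+1 S
            /\ (2 * f + 1 <= #|` S|)%N.

(* A deterministic protocol.  A process is initialised with its own         *)
(* identifier, its participant detector PD_i and its proposal only (it is   *)
(* given neither Pi, nor n, nor f, nor GST, nor delta).  At each step it    *)
(* receives the (possibly empty) list of delivered messages, tagged with    *)
(* their (authenticated) sender, and outputs a list of (destination,        *)
(* message) pairs.  [p_ids m] is the list of process identifiers carried in *)
(* the content of m (through which processes may learn of other processes). *)
Record protocol (V : Type) := Protocol {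
  p_state : Type;
  p_msg : Type;
  p_ids : p_msg -> seq pid;
  p_init : pid -> {fset pid} -> V -> p_state;
  p_step : pid -> p_state -> seq (pid * p_msg) -> p_state * seq (pid * p_msg);
  p_decision : p_state -> option V }.

Arguments p_state {V} p.
Arguments p_msg {V} p.
Arguments p_ids {V} p _.
Arguments p_init {V} p _ _ _.
Arguments p_step {V} p _ _ _.
Arguments p_decision {V} p _.

(* The adversary of a run: the (unknown) global stabilisation time and      *)
(* delay bound, crash times of faulty processes, and the delivery time of   *)
(* the k-th message sent by process j at time s ([deliv j s k]).            *)
Record adversary := Adversary {
  a_GST : nat;
  a_delta : nat;
  a_crash : pid -> option nat;
  a_deliv : pid -> nat -> nat -> nat }.

Definition alive (Pi : {fset pid}) (A : adversary) (i : pid) (t : nat) : bool :=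
  (i \in Pi) && (if a_crash A i is Some c then (t < c)%N else true).

(* Messages delivered to i at time t, given the outputs [outs] of the steps *)
(* at times 0 .. t-1 ([nth] s outs = outputs of the step at time s).        *)
Definition inbox (M : Type) (Pi : {fset pid}) (A : adversary)
    (outs : seq (pid -> seq (pid * M))) (i t : pid) : seq (pid * M) :=
  flatten [seq flatten
     [seq (let o := nth (fun _ => [::]) outs s j in
           [seq (j, km.2.2) | km <- zip (iota 0 (size o)) o &
                              (km.2.1 == i) && (a_deliv A j s km.1 == t)])
     | j <- sort leq Pi]
   | s <- iota 0 t].

(* [exec P Pi PD prop A n] = (states before the step at time n,            *)
(*                            outputs of the steps at times 0 .. n-1).      *)
Fixpoint exec V (P : protocol V) (Pi : {fset pid}) (PD : pid -> {fset pid})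
    (prop : pid -> V) (A : adversary) (n : nat)
    : (pid -> p_state P) * seq (pid -> seq (pid * p_msg P)) :=
  match n with
  | 0 => (fun i => p_init P i (PD i) (prop i), [::])
  | n'.+1 =>
      let: (st, outs) := exec P Pi PD prop A n' in
      let res := fun i =>
        if alive Pi A i n' then p_step P i (st i) (inbox Pi A outs i n')
        else (st i, [::]) in
      (fun i => (res i).1, rcons outs (fun i => (res i).2))
  end.

Definition state_at V (P : protocol V) Pi PD prop A (i : pid) (t : nat) :=
  (exec P Pi PD prop A t).1 i.

Definition out_at V (P : protocol V) Pi PD prop A (i : pid) (t : nat) :=
  nth (fun _ => [::]) (exec P Pi PD prop A t.+1).2 t i.

Definition in_at V (P : protocol V) Pi PD prop A (i : pid) (t : nat) :=
  inbox Pi A (exec P Pi PD prop A t).2 i t.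

Definition knows V (P : protocol V) Pi PD prop A (i : pid) (t : nat) (x : pid)
    : Prop :=
  [\/ x = i, x \in PD i |
      exists s j m, (s <= t)%N /\ List.In (j, m) (in_at P Pi PD prop A i s) /\
                    (x = j \/ x \in p_ids P m)].

Definition respects_knowledge V (P : protocol V) Pi PD prop A : Prop :=
  forall i t d m, alive Pi A i t -> List.In (d, m) (out_at P Pi PD prop A i t) ->
    knows P Pi PD prop A i t d /\
    (forall x, x \in p_ids P m -> knows P Pi PD prop A i t x).

(* Admissible adversary for the system (Pi, F): only faulty processes crash *)
(* (crash faults, the weakest fault model considered), every message is     *)
(* eventually delivered (reliable channels) after at least one time unit,   *)
(* and partial synchrony: a message sent at time s between correct          *)
(* processes is delivered by max(s, GST) + delta.                           *)
Definition admissible V (P : protocol V) Pi PD prop (F : {fset pid})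
    (A : adversary) : Prop :=
  [/\ forall i c, a_crash A i = Some c -> i \in F,
      forall j s k, (s < a_deliv A j s k)%N &
      forall j s k i m,
        j \in Pi `\` F -> i \in Pi `\` F ->
        nth (i, m) (out_at P Pi PD prop A j s) k = (i, m) ->
        (k < size (out_at P Pi PD prop A j s))%N ->
        (a_deliv A j s k <= maxn s (a_GST A) + a_delta A)%N].

Definition decides V (P : protocol V) Pi PD prop A (i : pid) (v : V) : Prop :=
  exists t, p_decision P (state_at P Pi PD prop A i t) = Some v /\
    forall t', (t' < t)%N -> p_decision P (state_at P Pi PD prop A i t') = None.

Definition consensus_run V (valid : V -> Prop) (P : protocol V) Pi PD prop
    (F : {fset pid}) A : Prop :=
  [/\
      (forall i v, i \in Pi `\` F -> decides P Pi PD prop A i v ->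
         valid v /\ exists j, j \in Pi /\ prop j = v),
      (forall i j v w, i \in Pi `\` F -> j \in Pi `\` F ->
         decides P Pi PD prop A i v -> decides P Pi PD prop A j w -> v = w) &
      (forall i, i \in Pi `\` F -> exists v, decides P Pi PD prop A i v)].

Definition solves_consensus_Gdi V (valid : V -> Prop) (P : protocol V) : Prop :=
  forall (Pi : {fset pid}) (PD : pid -> {fset pid}) (f : nat) (F : {fset pid})
         (prop : pid -> V) (A : adversary),
    system_ok Pi PD f F ->
    in_Gdi Pi PD f F ->
    (forall i, i \in Pi `\` F -> valid (prop i)) ->
    admissible P Pi PD prop F A ->
    respects_knowledge P Pi PD prop A /\ consensus_run valid P Pi PD prop F A.

(* Main.v *)
Require Import Defs.
From mathcomp Require Import all_boot finmap zify.
Local Open Scope fset_scope.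

Lemma exec_S V (P : protocol V) Pi PD prop A n :
 exec P Pi PD prop A n.+1 =
 ((fun i => (if alive Pi A i n then p_step P i ((exec P Pi PD prop A n).1 i)
               (inbox Pi A (exec P Pi PD prop A n).2 i n)
             else ((exec P Pi PD prop A n).1 i, [::])).1),
  rcons (exec P Pi PD prop A n).2 (fun i => (if alive Pi A i n then p_step P i ((exec P Pi PD prop A n).1 i)
               (inbox Pi A (exec P Pi PD prop A n).2 i n)
             else ((exec P Pi PD prop A n).1 i, [::])).2)).
Proof. by rewrite /=; case: (exec P Pi PD prop A n). Qed.

Lemma exec_size V (P : protocol V) Pi PD prop A n :
  size (exec P Pi PD prop A n).2 = n.
Proof. elim: n => [|n IH] //; by rewrite exec_S /= size_rcons IH. Qed.

Lemma exec_prefix V (P : protocol V) Pi PD prop A n s d :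
  (s < n)%N -> nth d (exec P Pi PD prop A n).2 s = nth d (exec P Pi PD prop A s.+1).2 s.
Proof.
elim: n => [|n IH] // Hs.
case: (ltngtP s n) => [Hsn|Hns|-> //].
  by rewrite exec_S nth_rcons exec_size Hsn IH.
by rewrite ltnS leqNgt Hns in Hs.
Qed.

Lemma filt_ext (M:Type) (o : seq (pid * M)) (n : nat) (P Q : nat * (pid * M) -> bool) :
  (forall k x, (k < size o)%N -> x.1 = nth 0 (map fst o) k -> P ((n + k)%N, x) = Q ((n + k)%N, x)) ->
  [seq km <- zip (iota n (size o)) o | P km] = [seq km <- zip (iota n (size o)) o | Q km].
Proof.
elim: o n => [|x o IH] n H //=.
have := H 0 x erefl erefl; rewrite addn0 => ->.
rewrite (IH n.+1) // => k y Hk Hy.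
by rewrite addSnnS; apply: H.
Qed.

Lemma flatten_nil (T : eqType) (U : Type) (f : T -> seq U) (l : seq T) :
  (forall j, j \in l -> f j = [::]) -> flatten (map f l) = [::].
Proof.
elim: l => [|y l IH] //= H; rewrite H ?inE ?eqxx //= IH // => j Hj.
by apply: H; rewrite inE Hj orbT.
Qed.

Lemma flatten_single (T : eqType) (U : Type) (f : T -> seq U) (l : seq T) x :
  uniq l -> x \in l -> (forall j, j \in l -> j != x -> f j = [::]) ->
  flatten (map f l) = f x.
Proof.
elim: l => [|y l IH] //= /andP[ny ul]; rewrite inE => Hx H.
case: (eqVneq x y) Hx => [Exy _|nxy] /=; first subst y.
  rewrite flatten_nil ?cats0 // => j Hj; apply: H; first by rewrite inE Hj orbT.
  by apply: contraNneq ny => <-.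
move=> Hx; rewrite H ?inE ?eqxx 1?eq_sym //= IH // => j Hj; apply: H; by rewrite inE Hj orbT.
Qed.

Lemma sim V (P : protocol V) (PiX PiY : {fset pid}) (PD : pid -> {fset pid})
  (pX pY pW : pid -> V) (AX AY AW : adversary) (G : nat) :
  1 \in PiX -> (forall j, j \in PiX -> j = 1) -> 1 \in PiY ->
  (forall t, alive PiX AX 1 t) -> (forall t, alive PiY AY 1 t) ->
  (forall t, ~~ alive PiY AW 1 t) ->
  (forall j t, j != 1 -> alive PiY AY j t = alive PiY AW j t) ->
  pY 1 = pX 1 -> (forall j, j != 1 -> pY j = pW j) ->
  (forall j s k, a_deliv AX j s k = s.+1) -> (forall j s k, a_deliv AW j s k = s.+1) ->
  (forall j s k, a_deliv AY j s k =
     if j == 1 then (if nth 0 (map fst (out_at P PiX PD pX AX 1 s)) k == 1 then s.+1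
                     else (maxn s G).+1)
     else (if nth 0 (map fst (out_at P PiY PD pW AW j s)) k == 1 then (maxn s G).+1
           else s.+1)) ->
  forall n, (n <= G.+1)%N ->
  [/\ (exec P PiY PD pY AY n).1 1 = (exec P PiX PD pX AX n).1 1,
      (forall j, j != 1 -> (exec P PiY PD pY AY n).1 j = (exec P PiY PD pW AW n).1 j) &
      (forall s, (s < n)%N ->
         [/\ nth (fun _ => [::]) (exec P PiY PD pY AY n).2 s 1 =
             nth (fun _ => [::]) (exec P PiX PD pX AX n).2 s 1,
             nth (fun _ => [::]) (exec P PiY PD pW AW n).2 s 1 = [::] &
             forall j, j != 1 -> nth (fun _ => [::]) (exec P PiY PD pY AY n).2 s j =
                       nth (fun _ => [::]) (exec P PiY PD pW AW n).2 s j])].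
Proof.
move=> h1X hX1 h1Y alX alY1 alW1 alYW ep1 epj dX dW dY.
elim=> [|n IH] Hn.
  by split => //= [|j Hj]; rewrite ?ep1 ?epj.
have [IS1 ISj IO] := IH (ltnW Hn).
have HnG : (n <= G)%N by [].
have I1 : inbox PiY AY (exec P PiY PD pY AY n).2 1 n = inbox PiX AX (exec P PiX PD pX AX n).2 1 n.
  rewrite /inbox; congr flatten; apply/eq_in_map => s; rewrite mem_iota add0n => /andP[_ Hs].
  have [O1 O2 O3] := IO s Hs.
  rewrite (@flatten_single _ _ _ _ 1); first last.
  - move=> j _ Hj /=.
    set o := nth _ _ s j.
    have Ho : o = out_at P PiY PD pW AW j s by rewrite /o O3 // /out_at exec_prefix.
    set F := filter _ _.
    suff -> : F = [::] by [].
    rewrite /F (@filt_ext _ _ _ _ (fun _ => false)); first by elim: (zip _ _).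
    move=> k x Hk Hx; rewrite add0n dY (negbTE Hj) -Ho -Hx.
    case: eqP => //= _; apply/negbTE/eqP; lia.
  - by rewrite mem_sort.
  - by rewrite sort_uniq fset_uniq.
  rewrite (@flatten_single _ _ _ _ 1); first last.
  - by move=> j /[!mem_sort] /hX1 ->; rewrite eqxx.
  - by rewrite mem_sort.
  - by rewrite sort_uniq fset_uniq.
  rewrite /= O1.
  set o := nth _ _ s 1.
  have Ho : o = out_at P PiX PD pX AX 1 s by rewrite /o /out_at exec_prefix.
  congr map; apply: filt_ext => k x Hk Hx.
  rewrite add0n dY dX eqxx -Ho -Hx; by case: eqP.
have I2 : forall i, i != 1 ->
   inbox PiY AY (exec P PiY PD pY AY n).2 i n = inbox PiY AW (exec P PiY PD pW AW n).2 i n.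
  move=> i Hi.
  rewrite /inbox; congr flatten; apply/eq_in_map => s; rewrite mem_iota add0n => /andP[_ Hs].
  have [O1 O2 O3] := IO s Hs.
  congr flatten; apply: eq_map => j /=.
  case: (eqVneq j 1) => [->|Hj].
    rewrite O2 /=.
    set F := filter _ _.
    suff -> : F = [::] by [].
    rewrite /F (@filt_ext _ _ _ _ (fun _ => false)); first by elim: (zip _ _).
    move=> k x Hk Hx; rewrite add0n dY eqxx.
    have Ho : nth (fun _ => [::]) (exec P PiY PD pY AY n).2 s 1 = out_at P PiX PD pX AX 1 s.
      by rewrite O1 /out_at exec_prefix.
    rewrite -Ho -Hx.
    case: (eqVneq x.1 i) => [Exi|] //=.
    rewrite Exi (negbTE Hi) /=; apply/negbTE/eqP; lia.
  rewrite O3 //.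
  set o := nth _ _ s j.
  have Ho : o = out_at P PiY PD pW AW j s by rewrite /o /out_at exec_prefix.
  congr map; apply: filt_ext => k x Hk Hx.
  rewrite add0n dY dW (negbTE Hj) -Ho -Hx.
  case: (eqVneq x.1 i) => [->|] //=; by rewrite (negbTE Hi).
split.
- by rewrite !exec_S /= alX alY1 IS1 I1.
- move=> j Hj; rewrite !exec_S /= alYW // ISj // I2 //.
- move=> s Hs; rewrite !exec_S /= !nth_rcons !exec_size.
  case: (ltngtP s n) => [Hsn|Hns|Esn]; last subst s.
  + by have := IO s Hsn.
  + by [].
  + rewrite alX alY1 IS1 I1 (negbTE (alW1 n)); split => // j Hj.
    by rewrite alYW // ISj // I2.
Qed.

Definition PiY : {fset pid} := [fset 1; 2; 3; 4].
Definition PiX : {fset pid} := [fset 1].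
Definition PDc : pid -> {fset pid} := fun i => if i == 1 then fset0 else PiY.

Lemma inPiY x : (x \in PiY) = [|| x == 1, x == 2, x == 3 | x == 4].
Proof. by rewrite /PiY !inE -!orbA. Qed.
Lemma inV x : (x \in PiY `\` [fset 1]) = [|| x == 2, x == 3 | x == 4].
Proof. rewrite in_fsetD inPiY !inE; by case: x => [|[|[|[|[|x]]]]]. Qed.
Lemma inVY x : (x \in PiY `\` fset0) = [|| x == 1, x == 2, x == 3 | x == 4].
Proof. by rewrite in_fsetD inPiY !inE. Qed.
Lemma inS x : (x \in [fset 2; 3; 4]) = [|| x == 2, x == 3 | x == 4].
Proof. by rewrite !inE -!orbA. Qed.
Lemma card234 : #|` [fset 2; 3; 4]| = 3.
Proof. by rewrite fsetUC cardfsU1 cardfs2 !inE. Qed.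
Lemma EY x y : x != 1 -> Gdi_edge PDc x y = (y \in PiY).
Proof. by rewrite /Gdi_edge /PDc => /negbTE ->. Qed.
Lemma E1 y : Gdi_edge PDc 1 y = false.
Proof. by rewrite /Gdi_edge /PDc eqxx inE. Qed.

Lemma inX x : (x \in PiX `\` fset0) = (x == 1).
Proof. by rewrite !inE. Qed.

Lemma GX : in_Gdi PiX PDc 0 fset0.
Proof.
exists [fset 1]; split; last by rewrite cardfs1.
split.
- move=> x y; rewrite !inX => /eqP-> /eqP->; split; first by rewrite inX.
  by exists [::].
- split.
  + by apply/fsubsetP => z; rewrite inE inX.
  + by apply/fset0Pn; exists 1; rewrite inE.
  + move=> x y; rewrite !inE => /eqP-> /eqP->; split; first by rewrite inX.
    by exists [::].
  + by move=> x y _; rewrite inX inE.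
- move=> S' [/fsubsetP sub ne _ _]; apply/fsetP => z; rewrite inE.
  apply/idP/idP => [/sub|/eqP->]; first by rewrite inX.
  case/fset0Pn: ne => w Hw; have := sub _ Hw; rewrite inX => /eqP Ew.
  by rewrite -Ew.
- by move=> x y; rewrite !inE => /eqP-> /eqP->; rewrite eqxx.
- by move=> x y; rewrite inX inE => ->.
Qed.

Lemma GY : in_Gdi PiY PDc 0 fset0.
Proof.
exists [fset 1]; split; last by rewrite cardfs1.
split.
- move=> x y Hx Hy; split => //; exists [:: 2; y]; split => //=.
  move: Hx Hy; rewrite !inVY -!inPiY => Hx Hy.
  by rewrite !(EY 2) // Hx Hy orbT inPiY.
- split.
  + by apply/fsubsetP => z; rewrite inE inVY => ->.
  + by apply/fset0Pn; exists 1; rewrite inE.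
  + move=> x y; rewrite !inE => /eqP-> /eqP->; split; first by rewrite inVY.
    by exists [::].
  + by move=> x y; rewrite inE => /eqP->; rewrite E1.
- move=> S' [/fsubsetP sub ne scc clo].
  have H1 : 1 \in S'.
    case/fset0Pn: ne => w Hw; case: (eqVneq w 1) => [<-//|nw].
    by apply: (clo w); rewrite ?inVY ?EY ?inPiY.
  apply/fsetP => z; rewrite inE.
  apply/idP/idP => [Hz|/eqP->//].
  have [_ [[|b p] [/= Hp Hl]]] := scc _ _ H1 Hz; first by rewrite -Hl.
  by move: Hp.
- by move=> x y; rewrite !inE => /eqP-> /eqP->; rewrite eqxx.
- move=> x y Hx Hn; rewrite inE => /eqP->.
  have nx : x != 1 by apply: contraNneq Hn => ->; rewrite inE.
  exists [:: [::]]; split => //.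
  + by move=> p; rewrite inE => /eqP-> /=; rewrite EY // inPiY.
  + by move=> p q v; rewrite !inE => /eqP-> /eqP->; rewrite eqxx.
Qed.

Lemma n1S x : x \in [fset 2; 3; 4] -> x != 1.
Proof. by rewrite inS => /or3P[]/eqP->. Qed.

Lemma GW : in_Gdi PiY PDc 1 [fset 1].
Proof.
exists [fset 2; 3; 4]; split; last by rewrite card234.
split.
- move=> x y Hx Hy; split => //; exists [:: 2; y]; split => //=.
  move: Hx Hy; rewrite !inV => Hx Hy.
  rewrite !(EY 2) // !inPiY Hy.
  by case/or3P: Hx => /eqP->; rewrite !orbT.
- split.
  + by apply/fsubsetP => z; rewrite inS inV.
  + by apply/fset0Pn; exists 2; rewrite inS.
  + move=> x y Hx Hy; split; first by rewrite inV -inS.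
    exists [:: y]; split => //=; rewrite EY ?n1S // inV -inS Hy andbT.
    by move: Hy; rewrite inS inPiY => /or3P[]/eqP->.
  + by move=> x y _; rewrite inV inS.
- move=> S' [/fsubsetP sub ne scc clo].
  case/fset0Pn: ne => w Hw.
  have nw : w != 1 by move: (sub _ Hw); rewrite inV => /or3P[]/eqP->.
  apply/fsetP => z; rewrite inS -inV.
  apply/idP/idP => [/sub //|Hz].
  apply: (clo w) => //; rewrite EY //.
  by move: Hz; rewrite inV inPiY => /or3P[]/eqP->.
- move=> x y Hx Hy Hxy.
  exists [:: [::]; [:: (9 - x - y)%N]].
  move: Hx Hy Hxy; rewrite !inS => /or3P[]/eqP-> /or3P[]/eqP-> //= _;
  (split => //; [move=> p; rewrite !inE => /orP[]/eqP-> /=; rewrite /induced /Gdi_edge /PDc /= ?inPiY ?inS //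
  | by move=> p q v; rewrite !inE => /orP[]/eqP-> /orP[]/eqP-> //=; rewrite ?inE //= => /eqP->]).
- by move=> x y; rewrite inV inS => ->.
Qed.

Theorem theorem7 (V : Type) (valid : V -> Prop) (v0 v1 : V) :
  v0 <> v1 -> valid v0 -> valid v1 ->
  ~ exists P : protocol V, solves_consensus_Gdi valid P.
Proof.
move=> Hne Hv0 Hv1 [P HP].
pose AX := Adversary 0 1 (fun _ => None) (fun _ s _ => s.+1).
pose AW := Adversary 0 1 (fun i => if i == 1 then Some 0 else None) (fun _ s _ => s.+1).
pose pX : pid -> V := fun _ => v0.
pose pW : pid -> V := fun _ => v1.
pose pY : pid -> V := fun i => if i == 1 then v0 else v1.
have sX : system_ok PiX PDc 0 fset0.
  split; [move=> i; rewrite inE => /eqP->; rewrite /PDc eqxx; exact: fsub0set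
               | exact: fsub0set | by rewrite cardfs0].
have sY : system_ok PiY PDc 0 fset0.
  split; [move=> i _; rewrite /PDc; case: ifP => _ //; exact: fsub0set
               | exact: fsub0set | by rewrite cardfs0].
have sW : system_ok PiY PDc 1 [fset 1].
  split; [move=> i _; rewrite /PDc; case: ifP => _ //; exact: fsub0set
               | by apply/fsubsetP => z; rewrite inE inPiY => -> | by rewrite cardfs1].
have aX : admissible P PiX PDc pX fset0 AX.
  split => //= j s k *; lia.
have aW : admissible P PiY PDc pW [fset 1] AW.
  split => //=; first (by move=> i c; case: eqP => [->|] //; rewrite inE).
  move=> j s k *; lia.
have [_ [VX _ TX]] := HP _ _ _ _ _ _ sX GX (fun _ _ => Hv0) aX.
have [_ [VW _ TW]] := HP _ _ _ _ _ _ sW GW (fun _ _ => Hv1) aW.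
have H1X : 1 \in PiX `\` fset0 by rewrite !inE.
have [v Hdv] := TX 1 H1X.
have [_ [j [_ Ejv]]] := VX 1 v H1X Hdv.
rewrite /pX in Ejv; subst v.
have H2W : 2 \in PiY `\` [fset 1] by rewrite inV.
have [w Hdw] := TW 2 H2W.
have [_ [j' [_ Ejw]]] := VW 2 w H2W Hdw.
rewrite /pW in Ejw; subst w.
case: Hdv => T1 [D1 N1]; case: Hdw => T2 [D2 N2].
pose G := maxn T1 T2.
pose dY := fun j s k =>
     if j == 1 then (if nth 0 (map fst (out_at P PiX PDc pX AX 1 s)) k == 1 then s.+1
                     else (maxn s G).+1)
     else (if nth 0 (map fst (out_at P PiY PDc pW AW j s)) k == 1 then (maxn s G).+1
           else s.+1).
pose AY := Adversary G 1 (fun _ => None) dY.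
have aY : admissible P PiY PDc pY fset0 AY.
  split => //= j0 s k *; rewrite /dY; case: ifP => _; case: ifP => _; lia.
have [_ [_ AgY _]] := HP _ _ _ _ _ _ sY GY
   (fun i _ => if i == 1 as b return valid (if b then v0 else v1) then Hv0 else Hv1) aY.
have SIM := @sim V P PiX PiY PDc pX pY pW AX AY AW G.
have := SIM; move=> {}SIM.
have e1 : 1 \in PiX by rewrite inE.
have e2 : forall j, j \in PiX -> j = 1 by move=> j0; rewrite inE => /eqP.
have e3 : 1 \in PiY by rewrite inPiY.
have e4 : forall t, alive PiX AX 1 t by move=> t; rewrite /alive inE.
have e5 : forall t, alive PiY AY 1 t by move=> t; rewrite /alive inPiY.
have e6 : forall t, ~~ alive PiY AW 1 t by move=> t; rewrite /alive /= andbF.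
have e7 : forall j t, j != 1 -> alive PiY AY j t = alive PiY AW j t.
  by move=> j0 t Hj; rewrite /alive /= (negbTE Hj).
have e8 : forall j, j != 1 -> pY j = pW j by move=> j0 Hj; rewrite /pY (negbTE Hj).
move: (SIM e1 e2 e3 e4 e5 e6 e7 erefl e8 (fun _ _ _ => erefl) (fun _ _ _ => erefl) (fun _ _ _ => erefl)) => {}SIM.
apply: Hne; apply: (AgY 1 2); rewrite ?inVY //.
- exists T1; split.
    rewrite /state_at; have [-> _ _] := SIM T1 ltac:(rewrite /G; lia); exact: D1.
  move=> t' Ht'; rewrite /state_at; have [-> _ _] := SIM t' ltac:(rewrite /G; lia); exact: N1.
- exists T2; split.
    rewrite /state_at; have [_ HS _] := SIM T2 ltac:(rewrite /G; lia); rewrite HS //; exact: D2.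
  move=> t' Ht'; rewrite /state_at; have [_ HS _] := SIM t' ltac:(rewrite /G; lia); rewrite HS //; exact: N2.
Qed.
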